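(* Let $m\geq1$, $I\subseteq\{1,\dots,m\}$, $A\subseteq F_I(\Gamma^m)$ a basic Presburger set, and $X=\widehat A$. Then for every face $B=F_J(A)$ of $A$, its socle satisfies $\widehat B=F_{\widehat J}(\widehat A)$, which is a face of $X$ (where $\widehat J=J\setminus\{m\}$). If moreover $A$ is non-negative, then conversely for every face $Y$ of $X$ there is a face $B$ of $A$ such that $\widehat B=Y$; in that case $B=Y\times\{+\infty\}$ if $m\notin\mathrm{Supp}\,B$, and $B=(Y\times\mathcal{Z})\cap\overline A$ if $m\in\mathrm{Supp}\,B$.
   Context: $\mathcal{Z}$ is a $\mathbb{Z}$-group (linearly ordered abelian group with smallest positive element $1$, $|\mathcal{Z}/n\mathcal{Z}|=n$ for all $n\geq1$), $\mathcal{Q}$ its divisible hull, $\Gamma=\mathcal{Z}\cup\{+\infty\}$, $\Omega=\mathcal{Q}\cup\{+\infty\}$. Topology on $\Omega$ generated by open intervals and $]a,+\infty]$; product topology on $\Omega^m$; $\overline A$ is closure in $\Omega^m$ (resp. $\Omega^{m-1}$). Non-negative: all coordinates $\geq0$. $\mathrm{Supp}\,a=\{i:a_i\neq+\infty\}$, $F_I(\Gamma^m)=\{a\in\Gamma^m:\mathrm{Supp}\,a=I\}$, $F_J(A)=\{a\in\overline A:\mathrm{Supp}\,a=J\}$, called a face of $A$ when non-empty; all points of a face $B$ have the same support $\mathrm{Supp}\,B$. Socle: $\widehat a=(a_1,\dots,a_{m-1})$, $\widehat A=\{\widehat a:a\in A\}$. A basic Presburger set $A\subseteq F_I(\Gamma^m)$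 is the set of $x\in F_I(\Gamma^m)$ satisfying finitely many conditions $\varphi_l(x)\geq\gamma_l$ and $\psi_l(x)\equiv\rho_l\,[n_l]$, with $\varphi_l,\psi_l:x\mapsto\sum_{i\in I}c_ix_i$, $c_i\in\mathbb{Z}$, $\gamma_l\in\mathcal{Z}$, $0\le\rho_l<n_l$ integers, and $a\equiv b\,[n]$ meaning $a-b\in n\mathcal{Z}$. *)

(* Defs.v *)
From mathcomp Require Import all_boot all_order all_algebra.
Set Implicit Arguments. Unset Strict Implicit. Unset Printing Implicit Defensive.
Import GRing.Theory.
Local Open Scope ring_scope.

Definition is_ordered_group (G : zmodType) (le : rel G) : Prop :=
  [/\ (forall x, le x x),
      (forall x y, le x y -> le y x -> x = y),
      (forall x y z, le x y -> le y z -> le x z),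
      (forall x y, le x y \/ le y x) &
      (forall x y z, le x y -> le (x + z) (y + z))].

Definition ltr_of (G : zmodType) (le : rel G) (x y : G) : Prop := le x y /\ x <> y.

Definition congr_mod (G : zmodType) (a b : G) (n : nat) : Prop :=
  exists k : G, a - b = k *+ n.

(* Z-group: linearly ordered abelian group with smallest positive element
   [one], and |Z / nZ| = n for all n >= 1 (there is a bijection between
   'I_n and Z/nZ, given by a complete system of n pairwise incongruent
   representatives). *)
Definition is_Zgroup (Z : zmodType) (le : rel Z) (one : Z) : Prop :=
  [/\ is_ordered_group le,
      ltr_of le 0 one,
      (forall x, ltr_of le 0 x -> le one x) &
      (forall n : nat, (0 < n)%N ->
         exists f : 'I_n -> Z,
           (forall i j, congr_mod (f i) (f j) n -> i = j) /\
           (forall x, exists i, congr_mod x (f i) n))].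

Definition is_divisible_hull (Z Q : zmodType) (leZ : rel Z) (leQ : rel Q)
  (iota : Z -> Q) : Prop :=
  [/\ is_ordered_group leQ,
      (forall x y, iota (x + y) = iota x + iota y) /\
      (forall x y, iota x = iota y -> x = y),
      (forall x y, leZ x y <-> leQ (iota x) (iota y)),
      (forall (q : Q) (n : nat), (0 < n)%N -> exists r : Q, r *+ n = q) &
      (forall q : Q, exists n : nat, (0 < n)%N /\ exists z : Z, q *+ n = iota z)].

(* Gamma = Z u {+oo} and Omega = Q u {+oo} are rendered as [option Z]   *)
(* and [option Q], with [None] = +oo.  Points of Gamma^m / Omega^m are   *)
(* functions 'I_m -> option _ ; coordinate m (last) is [ord_max].       *)

Definition supp (T : Type) (m : nat) (a : 'I_m -> option T) : {set 'I_m} :=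
  [set i | isSome (a i)].

Definition socle (T : Type) (m : nat) (a : 'I_m.+1 -> option T) : 'I_m -> option T :=
  fun i => a (widen_ord (leqnSn m) i).

Definition hat (T : Type) (m : nat) (S : ('I_m.+1 -> option T) -> Prop) :
  ('I_m -> option T) -> Prop :=
  fun y => exists x, S x /\ forall i, y i = socle x i.

Definition hatJ (m : nat) (J : {set 'I_m.+1}) : {set 'I_m} :=
  [set i | widen_ord (leqnSn m) i \in J].

Definition set_eq (U : Type) (S T : U -> Prop) : Prop := forall x, S x <-> T x.

(* The topology on Omega is generated by the open intervals ]a,b[ and   *)
(* the sets ]a,+oo]; a basis of neighbourhoods of a finite q is given   *)
(* by the ]a,b[ with a < q < b (a, b in Q), and of +oo by the ]a,+oo].  *)
(* A point x lies in the closure of S in the product topology iff every *)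
(* basic product neighbourhood of x meets S.                            *)

Definition closure_Om (Q : zmodType) (leQ : rel Q) (m : nat)
  (S : ('I_m -> option Q) -> Prop) (x : 'I_m -> option Q) : Prop :=
  forall a b : 'I_m -> Q,
    (forall i, match x i with
               | Some q => ltr_of leQ (a i) q /\ ltr_of leQ q (b i)
               | None => True end) ->
    exists y, S y /\
      (forall i, match x i with
                 | Some _ => exists q, y i = Some q /\
                              ltr_of leQ (a i) q /\ ltr_of leQ q (b i)
                 | None => match y i with
                           | Some q => ltr_of leQ (a i) q
                           | None => True end
                 end).

Definition embed (Z Q : Type) (iota : Z -> Q) (m : nat)
  (A : ('I_m -> option Z) -> Prop) : ('I_m -> option Q) -> Prop :=
  fun y => exists a, A a /\ forall i, y i = omap iota (a i).

Definition clos (Z Q : zmodType) (leQ : rel Q) (iota : Z -> Q) (m : nat)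
  (A : ('I_m -> option Z) -> Prop) : ('I_m -> option Q) -> Prop :=
  closure_Om leQ (embed iota A).

Definition Fface (Z Q : zmodType) (leQ : rel Q) (iota : Z -> Q) (m : nat)
  (J : {set 'I_m}) (A : ('I_m -> option Z) -> Prop) : ('I_m -> option Q) -> Prop :=
  fun x => clos leQ iota A x /\ supp x = J.

Definition linform (Z : zmodType) (m : nat) (I : {set 'I_m}) (c : 'I_m -> int)
  (x : 'I_m -> option Z) : Z :=
  \sum_(i in I) (odflt 0 (x i)) *~ c i.

Definition basic_presburger (Z : zmodType) (leZ : rel Z) (one : Z) (m : nat)
  (I : {set 'I_m}) (A : ('I_m -> option Z) -> Prop) : Prop :=
  exists (k : nat) (phi : 'I_k -> 'I_m -> int) (gam : 'I_k -> Z)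
         (l : nat) (psi : 'I_l -> 'I_m -> int) (rho n : 'I_l -> nat),
    (forall j, (0 < n j)%N /\ (rho j < n j)%N) /\
    forall x, A x <->
      [/\ supp x = I,
          (forall j, leZ (gam j) (linform I (phi j) x)) &
          (forall j, congr_mod (linform I (psi j) x) (one *+ rho j) (n j))].

Definition nonneg (Z : zmodType) (leZ : rel Z) (m : nat)
  (A : ('I_m -> option Z) -> Prop) : Prop :=
  forall a, A a -> forall i z, a i = Some z -> leZ 0 z.

(* Main.v *)
Require Import Defs.
From mathcomp Require Import all_boot all_order all_algebra.
From mathcomp Require Import ring lra zify.
From Stdlib Require Import Classical FunctionalExtensionality.
Set Implicit Arguments. Unset Strict Implicit. Unset Printing Implicit Defensive.
Import Order.TTheory GRing.Theory Num.Theory.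
Local Open Scope ring_scope.

Section Farkas.

Definition rowT n := ({ffun 'I_n -> int} * int)%type.

Inductive cone n (s : seq (rowT n)) : {ffun 'I_n -> int} -> int -> Prop :=
| cone0 : cone s 0 0
| coneS a b a' b' : (a, b) \in s -> cone s a' b' -> cone s (a + a') (b + b').

Lemma cone_add n (s : seq (rowT n)) a b a' b' :
  cone s a b -> cone s a' b' -> cone s (a + a') (b + b').
Proof.
elim=> [|a1 b1 a2 b2 H1 H2 IH] H; first by rewrite !add0r.
by rewrite -!addrA; apply: coneS => //; apply: IH.
Qed.

Lemma cone_mem n (s : seq (rowT n)) a b : (a, b) \in s -> cone s a b.
Proof. by move=> H; rewrite -(addr0 a) -(addr0 b); apply: coneS => //; apply: cone0. Qed.

Lemma cone_muln n (s : seq (rowT n)) a b k : cone s a b -> cone s (a *+ k) (b *+ k).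
Proof.
move=> H; elim: k => [|k IH]; first by rewrite !mulr0n; apply: cone0.
by rewrite !mulrS; apply: cone_add.
Qed.

Definition rval n (a : {ffun 'I_n -> int}) (d : 'I_n -> rat) : rat :=
  \sum_i (a i)%:~R * d i.

Definition sat n (s : seq (rowT n)) (d : 'I_n -> rat) :=
  forall r, r \in s -> (r.2)%:~R <= rval r.1 d.

Lemma rval0 n d : rval (0 : {ffun 'I_n -> int}) d = 0.
Proof. by rewrite /rval big1 // => i _; rewrite ffunE mul0r. Qed.

Lemma rvalD n (a b : {ffun 'I_n -> int}) d : rval (a + b) d = rval a d + rval b d.
Proof. by rewrite /rval -big_split; apply: eq_bigr => i _; rewrite ffunE intrD mulrDl. Qed.

Lemma rvalMn n (a : {ffun 'I_n -> int}) d k : rval (a *+ k) d = rval a d *+ k.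
Proof. by elim: k => [|k IH]; rewrite ?mulr0n ?rval0 // !mulrS rvalD IH. Qed.

Lemma keyr (bp bq rp rq : rat) (a b : nat) : (0 < a)%N -> (0 < b)%N ->
  bp *+ b + bq *+ a <= rp *+ b + rq *+ a -> (bp - rp) / a%:R <= (rq - bq) / b%:R.
Proof.
move=> ha hb.
rewrite -(mulr_natr bp) -(mulr_natr bq) -(mulr_natr rp) -(mulr_natr rq).
have hA : (0:rat) < a%:R by rewrite ltr0n.
have hB : (0:rat) < b%:R by rewrite ltr0n.
move: hA hB; move: (a%:R : rat) (b%:R : rat) => A B hA hB h.
rewrite ler_pdivrMr // mulrAC ler_pdivlMr //.
nra.
Qed.

Lemma sep (T : eqType) (P N : seq T) (L U : T -> rat) :
  (forall p q, p \in P -> q \in N -> L p <= U q) ->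
  exists x, (forall p, p \in P -> L p <= x) /\ (forall q, q \in N -> x <= U q).
Proof.
elim: P => [|p P IH] H.
  elim: N H => [|q N IH] H; first by exists 0; split.
  have [] := IH; first by move=> p q'; rewrite in_nil.
  move=> x [_ Hx].
  case: (leP x (U q)) => h.
    exists x; split => // q'; rewrite inE => /orP [/eqP -> //|]; exact: Hx.
  exists (U q); split => // q'; rewrite inE => /orP [/eqP -> //|/Hx hx]; exact: le_trans (ltW h) hx.
have [] := IH; first by move=> p' q hp hq; apply: H => //; rewrite inE hp orbT.
move=> x [Hx1 Hx2].
case: (leP (L p) x) => h.
  exists x; split => // p'; rewrite inE => /orP [/eqP -> //|]; exact: Hx1.
exists (L p); split.
  move=> p'; rewrite inE => /orP [/eqP -> //|/Hx1 hx]; exact: le_trans hx (ltW h).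
by move=> q hq; apply: H => //; rewrite inE eqxx.
Qed.

Section Elim.
Variable n : nat.
Implicit Types (s : seq (rowT n.+1)).

Definition cf (a : {ffun 'I_n.+1 -> int}) := a ord0.
Definition tl (a : {ffun 'I_n.+1 -> int}) : {ffun 'I_n -> int} := [ffun i => a (lift ord0 i)].
Definition ext (a : {ffun 'I_n -> int}) : {ffun 'I_n.+1 -> int} :=
  [ffun i => if unlift ord0 i is Some j then a j else 0].
Definition comb (p q : rowT n.+1) : rowT n :=
  (tl (p.1 *+ `|cf q.1| + q.1 *+ `|cf p.1|), p.2 *+ `|cf q.1| + q.2 *+ `|cf p.1|).
Definition elimr s : seq (rowT n) :=
  [seq (tl r.1, r.2) | r <- s & cf r.1 == 0] ++
  [seq comb p q | p <- [seq r <- s | 0 < cf r.1], q <- [seq r <- s | cf r.1 < 0]].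

Lemma ext_tl a : cf a = 0 -> ext (tl a) = a.
Proof.
move=> H; apply/ffunP => i; rewrite !ffunE; case: unliftP => [j ->|->]; by rewrite ?ffunE.
Qed.

Lemma ext0 : ext 0 = 0.
Proof. by apply/ffunP => i; rewrite !ffunE; case: unliftP => // *; rewrite ffunE. Qed.

Lemma extD a b : ext (a + b) = ext a + ext b.
Proof. apply/ffunP => i; rewrite !ffunE; case: unliftP => [j _|_]; by rewrite ?ffunE ?addr0. Qed.

Lemma tlD a b : tl (a + b) = tl a + tl b.
Proof. by apply/ffunP => i; rewrite !ffunE. Qed.

Lemma tlMn a k : tl (a *+ k) = tl a *+ k.
Proof. by apply/ffunP => i; rewrite ffunE !ffunMnE ffunE. Qed.

Lemma combz (x y : int) : 0 < x -> y < 0 -> x *+ `|y| + y *+ `|x| = 0.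
Proof.
move=> hx hy.
rewrite -(mulr_natr x) -(mulr_natr y) !natz (gez0_abs (ltW hx)) (ltz0_abs hy). ring.
Qed.

Lemma ffunDMnE m (f g : {ffun 'I_m -> int}) k l i :
  (f *+ k + g *+ l) i = f i *+ k + g i *+ l.
Proof. by rewrite ffunE !ffunMnE. Qed.

Lemma elim_cone s r : r \in elimr s -> cone s (ext r.1) r.2.
Proof.
rewrite mem_cat => /orP [/mapP [r0 + ->] | /allpairsP [[p q] [/= + + ->]]].
  rewrite mem_filter => /andP [/eqP H1 H2] /=; rewrite ext_tl //; apply: cone_mem.
  by case: r0 H1 H2.
rewrite !mem_filter => /andP [Hp ps] /andP [Hq qs] /=.
rewrite ext_tl; last first.
  by rewrite /cf in Hp Hq *; rewrite ffunDMnE combz.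
by apply: cone_add; apply: cone_muln; apply: cone_mem; [case: p ps {Hp Hq}| case: q qs {Hp Hq}].
Qed.

Definition cns (x : rat) (d : 'I_n -> rat) : 'I_n.+1 -> rat :=
  fun i => if unlift ord0 i is Some j then d j else x.

Lemma rval_cns a x d : rval a (cns x d) = (cf a)%:~R * x + rval (tl a) d.
Proof.
rewrite /rval big_ord_recl /cns unlift_none; congr (_ + _).
by apply: eq_bigr => i _; rewrite liftK ffunE.
Qed.

Lemma sat_elim s d : sat (elimr s) d -> exists x, sat s (cns x d).
Proof.
move=> Hs.
pose L (r : rowT n.+1) := ((r.2)%:~R - rval (tl r.1) d) / (`|cf r.1|%:R : rat).
pose U (r : rowT n.+1) := (rval (tl r.1) d - (r.2)%:~R) / (`|cf r.1|%:R : rat).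
have [x [Hx1 Hx2]] : exists x, (forall p, p \in [seq r <- s | 0 < cf r.1] -> L p <= x) /\
                         (forall q, q \in [seq r <- s | cf r.1 < 0] -> x <= U q).
  apply: sep => p q Hp Hq.
  have : comb p q \in elimr s by rewrite mem_cat; apply/orP; right; apply/allpairsP; exists (p, q).
  move/Hs; rewrite /= tlD !tlMn rvalD !rvalMn intrD !rmorphMn.
  move: Hp Hq; rewrite !mem_filter => /andP [Hp _] /andP [Hq _] h.
  rewrite /L /U; apply: keyr h; rewrite absz_gt0; [by rewrite (gt_eqF Hp) | by rewrite (lt_eqF Hq)].
exists x => r rs; rewrite rval_cns.
case: (ltrgtP (cf r.1) 0) => hc.
- have := Hx2 r; rewrite mem_filter hc rs => /(_ isT).
  rewrite /U ler_pdivlMr; last by rewrite ltr0n absz_gt0 (lt_eqF hc).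
  rewrite natr_absz ltr0_norm // mulrNz.
  move: (rval _ _) (cf r.1)%:~R (r.2)%:~R => a b c h; nra.
- have := Hx1 r; rewrite mem_filter hc rs => /(_ isT).
  rewrite /L ler_pdivrMr; last by rewrite ltr0n absz_gt0 (gt_eqF hc).
  rewrite natr_absz gtr0_norm //.
  move: (rval _ _) (cf r.1)%:~R (r.2)%:~R => a b c h; nra.
- rewrite hc mul0r add0r; apply: (Hs (tl r.1, r.2)).
  rewrite mem_cat; apply/orP; left; apply/mapP; exists r => //.
  by rewrite mem_filter hc eqxx.
Qed.

Lemma cone_ext s (s' : seq (rowT n)) a b : (forall r, r \in s' -> cone s (ext r.1) r.2) ->
  cone s' a b -> cone s (ext a) b.
Proof.
move=> H; elim=> [|a1 b1 a2 b2 h1 _ IH]; first by rewrite ext0; apply: cone0.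
by rewrite extD; apply: cone_add => //; exact: (H (a1, b1) h1).
Qed.

End Elim.

Lemma farkas n (s : seq (rowT n)) : ~ (exists d, sat s d) -> exists b, 0 < b /\ cone s 0 b.
Proof.
elim: n s => [|n IH] s H.
  case: (boolP (has (fun r : rowT 0 => 0 < r.2) s)) => [/hasP [r rs hr] | hn].
    exists r.2; split => //.
    have -> : (0 : {ffun 'I_0 -> int}) = r.1 by apply/ffunP => -[].
    by apply: cone_mem; case: r rs hr.
  exfalso; apply: H; exists (fun _ => 0) => r rs.
  rewrite /rval big_ord0 lerz0; have := hasPn hn r rs; rewrite /= -leNgt; done.
have H' : ~ (exists d, sat (elimr s) d).
  by move=> [d /sat_elim [x hx]]; apply: H; exists (cns x d).
have [b [hb hc]] := IH _ H'; exists b; split => //.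
rewrite -ext0; apply: cone_ext hc; exact: elim_cone.
Qed.
End Farkas.

Section OG.
Variables (G : zmodType) (le : rel G) (Hle : is_ordered_group le).

Lemma ogR x : le x x. Proof. by case: Hle. Qed.
Lemma ogA x y : le x y -> le y x -> x = y. Proof. by case: Hle => _ H *; apply: H. Qed.
Lemma ogT x y z : le x y -> le y z -> le x z. Proof. by case: Hle => _ _ H *; apply: (H x y z). Qed.
Lemma ogtot x y : le x y \/ le y x. Proof. by case: Hle. Qed.
Lemma ogD x y z : le x y -> le (x + z) (y + z). Proof. by case: Hle => _ _ _ _ H; apply: H. Qed.
Lemma ogDl x y z : le x y -> le (z + x) (z + y).
Proof. by move/(ogD z); rewrite ![_ + z]addrC. Qed.
Lemma ogD2 x y z w : le x y -> le z w -> le (x + z) (y + w).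
Proof. move=> h1 h2; apply: ogT (ogD z h1) (ogDl y h2). Qed.
Lemma ogDKl x y z : le (z + x) (z + y) -> le x y.
Proof. by move/(ogDl (- z)); rewrite !addKr. Qed.
Lemma ogsub x y : le x y <-> le 0 (y - x).
Proof.
split => h; first by have := ogD (- x) h; rewrite subrr.
by have := ogD x h; rewrite add0r subrK.
Qed.
Lemma ogN x y : le x y -> le (- y) (- x).
Proof. by move=> h; apply/(ogsub (-y) (-x)); rewrite opprK addrC; apply/(ogsub x y). Qed.
Lemma ogN0 x : le x 0 -> le 0 (- x).
Proof. by move/ogN; rewrite oppr0. Qed.
Lemma ogMn x k : le 0 x -> le 0 (x *+ k).
Proof.
move=> h; elim: k => [|k IH]; first by rewrite mulr0n ogR.
by rewrite mulrS -(addr0 0); apply: ogD2.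
Qed.
Lemma ogMz x c : le 0 x -> (0 <= c)%R -> le 0 (x *~ c).
Proof. by case: c => // k h _; apply: ogMn. Qed.
Lemma ogMz1 x c : le 0 x -> (1 <= c)%R -> le x (x *~ c).
Proof.
case: c => // -[|k] h _ //; rewrite -pmulrn mulrS -{1}(addr0 x); apply: ogDl; exact: ogMn.
Qed.
Lemma ogMzN x c : le 0 x -> (c <= -1)%R -> le (x *~ c) (- x).
Proof.
move=> h hc; rewrite -(opprK c) mulrNz; apply: ogN; apply: ogMz1 => //; lia.
Qed.
Lemma ogsum (I : Type) (r : seq I) (P : pred I) (F : I -> G) :
  (forall i, P i -> le 0 (F i)) -> le 0 (\sum_(i <- r | P i) F i).
Proof.
move=> h; apply: (big_ind (fun v => le 0 v)) => //; first exact: ogR.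
by move=> a b ha hb; rewrite -(addr0 0); apply: ogD2.
Qed.
Lemma ogub (s : seq G) : exists t, forall x, x \in s -> le x t.
Proof.
elim: s => [|x s [t Ht]]; first by exists 0.
case: (ogtot x t) => h.
  by exists t => y; rewrite inE => /orP [/eqP -> //|]; apply: Ht.
by exists x => y; rewrite inE => /orP [/eqP -> //|/Ht hy]; [exact: ogR | exact: ogT hy h].
Qed.

Definition oglt x y := ltr_of le x y.
Lemma ogltE x y : ltr_of le x y <-> ~ le y x.
Proof.
split => [[h1 h2] h3|h]; first by apply: h2; apply: ogA.
case: (ogtot x y) => h1; last by [].
by split => // e; apply: h; rewrite e ogR.
Qed.
Lemma oglt_le x y : ltr_of le x y -> le x y. Proof. by case. Qed.
Lemma oglt_le_trans x y z : ltr_of le x y -> le y z -> ltr_of le x z.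
Proof. move=> /ogltE h1 h2; apply/ogltE => h3; apply: h1; exact: ogT h2 h3. Qed.
Lemma ogle_lt_trans x y z : le x y -> ltr_of le y z -> ltr_of le x z.
Proof. move=> h1 /ogltE h2; apply/ogltE => h3; apply: h2; exact: ogT h3 h1. Qed.
Lemma oglt_trans x y z : ltr_of le x y -> ltr_of le y z -> ltr_of le x z.
Proof. by move=> h1 h2; apply: oglt_le_trans h1 (oglt_le h2). Qed.
Lemma ogltD2 a b c d : ltr_of le a b -> ltr_of le c d -> ltr_of le (a + c) (b + d).
Proof.
move=> h1 /ogltE h2; apply/ogltE => h3; apply: h2; apply: (@ogDKl _ _ b).
apply: ogT h3 _; rewrite ![_ + c]addrC; apply: ogDl; exact: oglt_le.
Qed.
Lemma ogltN a b : ltr_of le a b -> ltr_of le (- b) (- a).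
Proof. by move=> /ogltE h; apply/ogltE => /ogN; rewrite !opprK. Qed.
Lemma ogltD a b c : ltr_of le a b -> ltr_of le (a + c) (b + c).
Proof. by move=> /ogltE h; apply/ogltE => /(ogD (- c)); rewrite !addrK. Qed.
End OG.

Section Dir.
Variables (Z : zmodType) (le : rel Z) (Hle : is_ordered_group le) (one : Z)
  (Hone : ltr_of le 0 one).

Definition zval N (a : {ffun 'I_N -> int}) (w : 'I_N -> Z) := \sum_i w i *~ a i.

Lemma zval0 N w : zval (0 : {ffun 'I_N -> int}) w = 0.
Proof. by rewrite /zval big1 // => i _; rewrite ffunE mulr0z. Qed.

Lemma zvalD N (a b : {ffun 'I_N -> int}) w : zval (a + b) w = zval a w + zval b w.
Proof. by rewrite /zval -big_split; apply: eq_bigr => i _; rewrite ffunE mulrzDr. Qed.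

Lemma dir_cone N (rows : seq (rowT N)) (Cond : Z -> ('I_N -> Z) -> Prop) :
  (forall r, r \in rows -> exists G, forall t w, Cond t w -> le (G + t *~ r.2) (zval r.1 w)) ->
  forall a b, cone rows a b -> exists G, forall t w, Cond t w -> le (G + t *~ b) (zval a w).
Proof.
move=> H a b; elim=> [|a1 b1 a2 b2 h1 _ [G2 IH]].
  by exists 0 => t w _; rewrite zval0 mulr0z addr0; apply: ogR.
have [G1 H1] := H _ h1; exists (G1 + G2) => t w C.
rewrite zvalD mulrzDr addrACA; apply: ogD2 => //; [exact: (H1 t w C) | exact: IH].
Qed.

Definition erow N (i : 'I_N) (v : int) : {ffun 'I_N -> int} := [ffun i' => if i' == i then v else 0].

Lemma zval_e N (i : 'I_N) v w : zval (erow i v) w = w i *~ v.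
Proof.
rewrite /zval (bigD1 i) //= big1 ?addr0; first by rewrite ffunE eqxx.
by move=> i' /negbTE h; rewrite ffunE h mulr0z.
Qed.

Lemma rval_e N (i : 'I_N) v d : rval (erow i v) d = v%:~R * d i.
Proof.
rewrite /rval (bigD1 i) //= big1 ?addr0; first by rewrite ffunE eqxx.
by move=> i' /negbTE h; rewrite ffunE h mul0r.
Qed.

Variables (N : nat) (I : {set 'I_N}) (k : nat) (phi : 'I_k -> 'I_N -> int) (gam : 'I_k -> Z)
  (A : ('I_N -> option Z) -> Prop)
  (HA : forall a, A a -> supp a = I /\ forall j, le (gam j) (linform I (phi j) a)).

Definition phirow j : rowT N := ([ffun i => if i \in I then phi j i else 0], 0).

Lemma zval_phirow j w : zval (phirow j).1 w = \sum_(i in I) w i *~ phi j i.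
Proof.
by rewrite /zval [RHS]big_mkcond; apply: eq_bigr => i _; rewrite ffunE; case: ifP; rewrite ?mulr0z.
Qed.

Lemma dir (Fx F : {set 'I_N}) (c : 'I_N -> Z) :
  (forall i, i \in F -> i \notin Fx) ->
  (forall t, exists a, A a /\ (forall i, i \in Fx -> a i = Some (c i)) /\
                       (forall i, i \in F -> exists v, a i = Some v /\ le t v)) ->
  exists d : 'I_N -> int, (forall i, i \in Fx -> d i = 0) /\ (forall i, i \in F -> 1 <= d i) /\
    forall j, 0 <= \sum_(i in I) d i * phi j i.
Proof.
move=> Hdisj Hyp.
pose rows := [seq phirow j | j <- enum 'I_k] ++ [seq (erow i 1, 0) | i <- enum Fx] ++
   [seq (erow i (-1), 0) | i <- enum Fx] ++ [seq (erow i 1, 1) | i <- enum F].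
case: (classic (exists d, sat rows d)) => [[d Hd]|Hnd].
  have Hphi j : 0 <= \sum_(i in I) (phi j i)%:~R * d i.
    have := Hd (phirow j); rewrite mem_cat map_f ?mem_enum // => /(_ isT).
    have -> : rval (phirow j).1 d = \sum_(i in I) (phi j i)%:~R * d i.
      rewrite /rval [RHS]big_mkcond /=; apply: eq_bigr => i _; rewrite ffunE.
      by case: ifP; rewrite ?mul0r.
    done.
  have HFx i : i \in Fx -> d i = 0.
    move=> hi; have := Hd (erow i 1, 0); have := Hd (erow i (-1), 0).
    rewrite !mem_cat !map_f ?mem_enum ?orbT // => /(_ isT) /= h1 /(_ isT) /= h2.
    move: h1 h2; rewrite !rval_e /=; lra.
  have HF i : i \in F -> 1 <= d i.
    move=> hi; have := Hd (erow i 1, 1).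
    rewrite !mem_cat !map_f ?mem_enum ?orbT // => /(_ isT) /=.
    rewrite rval_e /=; lra.
  pose den : int := \prod_i denq (d i).
  pose D i := numq (d i) * \prod_(j | j != i) denq (d j).
  have ED i : (D i)%:~R = d i * den%:~R :> rat.
    rewrite /D /den /= (intrM _ (numq (d i))) numqE [in RHS](bigD1 i) //=.
    by rewrite (intrM _ (denq (d i))) mulrA.
  have hden : (1 : rat) <= den%:~R.
    rewrite ler1z -gtz0_ge1; apply: prodr_gt0 => i _; exact: denq_gt0.
  exists D; split; [|split].
  - by move=> i hi; apply/eqP; rewrite -(@intr_eq0 rat) ED HFx // mul0r.
  - move=> i hi; rewrite -(@ler1z rat) ED; have := HF i hi; nra.
  - move=> j; rewrite -(@ler0z rat) rmorph_sum /=.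
    have -> : \sum_(i in I) ((D i * phi j i)%:~R : rat) = den%:~R * \sum_(i in I) (phi j i)%:~R * d i.
      by rewrite mulr_sumr; apply: eq_bigr => i _; rewrite (intrM _ (D i)) ED; ring.
    by apply: mulr_ge0 => //; apply: le_trans hden.
have [b [hb hc]] := farkas Hnd.
pose g j := gam j - \sum_(i in I | i \in Fx) c i *~ phi j i.
pose Cond t (w : 'I_N -> Z) := [/\ le 0 t, (forall i, i \in Fx -> w i = 0),
    (forall i, i \in F -> le t (w i)) & (forall j, le (g j) (zval (phirow j).1 w))].
have [G HG] : exists G, forall t w, Cond t w -> le (G + t *~ b) (zval 0 w).
  apply: (dir_cone _ hc) => r; rewrite !mem_cat => /or4P [].
  - move=> /mapP [j _ ->]; exists (g j) => t w [_ _ _ h]; rewrite mulr0z addr0; exact: h.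
  - move=> /mapP [i hi ->]; exists 0 => t w [_ h _ _] /=.
    by rewrite mulr0z addr0 zval_e h ?mul0rz ?ogR // -mem_enum.
  - move=> /mapP [i hi ->]; exists 0 => t w [_ h _ _] /=.
    by rewrite mulr0z addr0 zval_e h ?mul0rz ?ogR // -mem_enum.
  - move=> /mapP [i hi ->]; exists 0 => t w [_ _ h _] /=.
    by rewrite add0r zval_e; apply: h; rewrite -mem_enum.
have [t Ht] := ogub Hle [:: 0; - G + one].
have [a [Aa [Ha1 Ha2]]] := Hyp t.
pose w i := if i \in Fx then 0 else odflt 0 (a i).
have Cw : Cond t w.
  split.
  - by apply: Ht; rewrite !inE eqxx.
  - by move=> i hi; rewrite /w hi.
  - move=> i hi; rewrite /w (negbTE (Hdisj i hi)); have [v [-> hv]] := Ha2 i hi; exact: hv.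
  - move=> j; have [_ Hj] := HA Aa; have := Hj j.
    have -> : linform I (phi j) a = \sum_(i in I | i \in Fx) c i *~ phi j i + zval (phirow j).1 w.
      rewrite zval_phirow /linform (bigID (fun i => i \in Fx)) /=.
      rewrite [X in _ = _ + X](bigID (fun i => i \in Fx)) /= [X in _ = _ + (X + _)]big1; last first.
        by move=> i /andP [_ hi]; rewrite /w hi mul0rz.
      rewrite add0r; congr (_ + _).
        by apply: eq_bigr => i /andP [_ hi]; rewrite Ha1.
      by apply: eq_bigr => i /andP [_ /negbTE hi]; rewrite /w hi.
    by move/(ogD Hle (- \sum_(i in I | i \in Fx) c i *~ phi j i)); rewrite [_ + zval _ _]addrC addrK.
have := HG t w Cw; rewrite zval0 => h.
have ht1 : le (- G + one) t by apply: Ht; rewrite !inE eqxx orbT.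
have ht0 : le 0 t by apply: Ht; rewrite !inE eqxx.
have h2 : le t (t *~ b) by apply: ogMz1 => //; rewrite -gtz0_ge1.
have h3 : le one (G + t *~ b).
  have := ogDl Hle G (ogT Hle ht1 h2); rewrite addrA subrr add0r; done.
by exfalso; case: Hone => h4 h5; apply: h5; exact: (ogA Hle h4 (ogT Hle h3 h)).
Qed.
End Dir.

Definition zclos (Z : Type) (le : rel Z) N (S : ('I_N -> option Z) -> Prop) (z : 'I_N -> option Z) :=
  forall t : Z, exists s, S s /\ forall i, match z i with
     | Some v => s i = Some v
     | None => match s i with Some w => le t w | None => True end end.

Lemma supp_inP (T : Type) N (a : 'I_N -> option T) I i :
  supp a = I -> i \in I -> exists v, a i = Some v.
Proof. by move=> <-; rewrite inE; case: (a i) => // v _; exists v. Qed.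

Lemma supp_outP (T : Type) N (a : 'I_N -> option T) I i :
  supp a = I -> i \notin I -> a i = None.
Proof. by move=> <-; rewrite inE; case: (a i). Qed.

Section Lift.
Variables (Z : zmodType) (le : rel Z) (one : Z) (HZ : is_Zgroup le one).
Variables (N : nat) (I : {set 'I_N}) (A : ('I_N -> option Z) -> Prop)
  (k : nat) (phi : 'I_k -> 'I_N -> int) (gam : 'I_k -> Z)
  (l : nat) (psi : 'I_l -> 'I_N -> int) (rho nn : 'I_l -> nat)
  (Hn : forall j, (0 < nn j)%N /\ (rho j < nn j)%N)
  (HAx : forall x, A x <-> [/\ supp x = I, (forall j, le (gam j) (linform I (phi j) x)) &
          (forall j, congr_mod (linform I (psi j) x) (one *+ rho j) (nn j))]).

Lemma Hle : is_ordered_group le. Proof. by case: HZ. Qed.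
Lemma Hone : ltr_of le 0 one. Proof. by case: HZ. Qed.
Lemma Hmin x : ltr_of le 0 x -> le one x. Proof. by case: HZ => _ _ H _; apply: H. Qed.

Definition good (d : 'I_N -> int) :=
  (forall j, 0 <= \sum_(i in I) d i * phi j i) /\
  (forall j, exists e : int, \sum_(i in I) d i * psi j i = (nn j)%:Z * e).

Definition shift (a : 'I_N -> option Z) (T : Z) (d : 'I_N -> int) : 'I_N -> option Z :=
  fun i => omap (fun v => v + T *~ d i) (a i).

Lemma supp_shift a T d : supp (shift a T d) = supp a.
Proof. by apply/setP => i; rewrite !inE /shift; case: (a i). Qed.

Lemma linform_shift c a T d : supp a = I ->
  linform I c (shift a T d) = linform I c a + T *~ (\sum_(i in I) d i * c i).
Proof.
move=> Hs; rewrite /linform mulrz_sumr -big_split; apply: eq_bigr => i hi.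
have [v hv] := supp_inP Hs hi; by rewrite /shift hv /= mulrzDl mulrzA.
Qed.

Lemma shiftA a T d : A a -> good d -> le 0 T -> A (shift a T d).
Proof.
move=> /HAx [Hs H1 H2] [G1 G2] hT; apply/HAx; split.
- by rewrite supp_shift.
- move=> j; rewrite linform_shift //; rewrite -[gam j]addr0; apply: (ogD2 Hle) => //.
  exact: (ogMz Hle hT (G1 j)).
- move=> j; rewrite linform_shift //; have [kk hk] := H2 j; have [e he] := G2 j.
  exists (kk + T *~ e); rewrite addrAC hk he mulrnDl; congr (_ + _).
  by rewrite pmulrn -mulrzA mulrC.
Qed.

Lemma zlift a (J : {set 'I_N}) d : A a -> good d -> J \subset I -> (forall i, i \in J -> d i = 0) ->
  (forall i, i \in I -> i \notin J -> 1 <= d i) -> zclos le A (fun i => if i \in J then a i else None).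
Proof.
move=> Aa Gd JI H0 H1 t.
have Hs : supp a = I by case/HAx: Aa.
have [T HT] := ogub Hle (0 :: [seq t - odflt 0 (a i) | i <- enum 'I_N]).
have T0 : le 0 T by apply: HT; rewrite inE eqxx.
exists (shift a T d); split; first exact: shiftA.
move=> i; case: ifP => hJ.
  have [v hv] := supp_inP Hs (subsetP JI i hJ).
  by rewrite /shift hv /= H0 // mulr0z addr0.
rewrite /shift; case E: (a i) => [v|] //=.
have hI : i \in I by rewrite -Hs inE E.
have h : le (t - v) T.
  by apply: HT; rewrite inE; apply/orP; right; apply/mapP; exists i; rewrite ?mem_enum ?E.
have h2 := ogMz1 Hle T0 (H1 i hI (negbT hJ)).
have := ogDl Hle v (ogT Hle h h2); rewrite addrC subrK; done.
Qed.

Lemma goodN (D : 'I_N -> int) :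
  (forall j, 0 <= \sum_(i in I) D i * phi j i) ->
  good (fun i => D i * \prod_(j < l) (nn j)%:Z).
Proof.
move=> H; split => j.
  have -> : \sum_(i in I) D i * \prod_(j0 < l) (nn j0)%:Z * phi j i =
            \prod_(j0 < l) (nn j0)%:Z * \sum_(i in I) D i * phi j i.
    by rewrite mulr_sumr; apply: eq_bigr => i _; ring.
  by apply: mulr_ge0 => //; apply: prodr_ge0 => *.
exists ((\sum_(i in I) D i * psi j i) * \prod_(j' | j' != j) (nn j')%:Z).
rewrite (bigD1 j) //= mulr_suml mulr_sumr; apply: eq_bigr => i _; ring.
Qed.

Lemma goodN_pos (D : 'I_N -> int) i : 1 <= D i -> 1 <= D i * \prod_(j < l) (nn j)%:Z.
Proof.
move=> h; have : 1 <= \prod_(j < l) (nn j)%:Z.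
  rewrite -gtz0_ge1; apply: prodr_gt0 => j _; have := (Hn j).1; lia.
nia.
Qed.

Lemma nonneg_dir a d i : nonneg le A -> A a -> good d -> i \in I -> 0 <= d i.
Proof.
move=> Hnn Aa Gd hi; rewrite leNgt; apply/negP => hd.
have Hs : supp a = I by case/HAx: Aa.
have [v hv] := supp_inP Hs hi.
have v0 : le 0 v by apply: (Hnn a Aa i).
have T0 : le 0 (v + one) by rewrite -[0]addr0; apply: (ogD2 Hle) => //; case: Hone.
have := Hnn _ (shiftA Aa Gd T0) i (v + (v + one) *~ d i).
rewrite /shift hv => /(_ erefl) h.
have hd' : d i <= -1 by lia.
have h3 := ogDl Hle v (ogMzN Hle T0 hd').
rewrite opprD addrA subrr add0r in h3.
have h4 := ogN Hle (ogT Hle h h3); rewrite opprK oppr0 in h4.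
case: Hone => h5 h6; apply: h6; exact: (ogA Hle h5 h4).
Qed.

End Lift.

Section Clos.
Variables (Z Q : zmodType) (leZ : rel Z) (leQ : rel Q) (iota : Z -> Q) (one : Z)
  (HZ : is_Zgroup leZ one) (HQ : is_divisible_hull leZ leQ iota).

Lemma HZo : is_ordered_group leZ. Proof. by case: HZ. Qed.
Lemma HQo : is_ordered_group leQ. Proof. by case: HQ. Qed.
Lemma iotaD x y : iota (x + y) = iota x + iota y. Proof. by case: HQ => _ [H _]. Qed.
Lemma iota_inj x y : iota x = iota y -> x = y. Proof. by case: HQ => _ [_ H] *; apply: H. Qed.
Lemma iota_le x y : leZ x y <-> leQ (iota x) (iota y). Proof. by case: HQ => _ _ H _ _; apply: H. Qed.
Lemma iota0 : iota 0 = 0.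
Proof. by apply: (@addrI _ (iota 0)); rewrite -iotaD !addr0. Qed.
Lemma iotaN x : iota (- x) = - iota x.
Proof. by apply: (@addrI _ (iota x)); rewrite -iotaD !subrr iota0. Qed.
Lemma iotaB x y : iota (x - y) = iota x - iota y.
Proof. by rewrite iotaD iotaN. Qed.
Lemma iota_lt x y : ltr_of leQ (iota x) (iota y) <-> ltr_of leZ x y.
Proof.
split => [[h1 h2]|[h1 h2]]; split.
- exact/iota_le.
- by move=> e; apply: h2; rewrite e.
- exact/iota_le.
- by move/iota_inj.
Qed.

Lemma one_pos : ltr_of leZ 0 one. Proof. by case: HZ. Qed.

Lemma eps : exists e, e + e = iota one /\ ltr_of leQ 0 e.
Proof.
case: HQ => _ _ _ H _; have [e he] := H (iota one) 2%N isT.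
exists e; split; first by rewrite -he mulr2n.
apply/(ogltE HQo) => h.
have := ogD2 HQo h h; rewrite -mulr2n he addr0 -iota0 => /iota_le h2.
case: one_pos => h3 h4; apply: h4; exact: (ogA HZo h3 h2).
Qed.

Lemma cofinal q : exists t, leQ q (iota t).
Proof.
case: HQ => _ _ _ _ H; have [n [hn [z hz]]] := H q.
case: (ogtot HQo 0 q) => h.
  exists z; rewrite -hz; case: n hn {hz} => // n _.
  rewrite mulrS -{1}(addr0 q); apply: (ogDl HQo q (ogMn HQo n h)).
by exists 0; rewrite iota0.
Qed.

Lemma cofinal_seq (s : seq Q) : exists t, forall q, q \in s -> ltr_of leQ q (iota t).
Proof.
have [t Ht] : exists t, forall q, q \in s -> leQ q (iota t).
  elim: s => [|q s [t Ht]]; first by exists 0.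
  have [t' Ht'] := cofinal q.
  have [u Hu] := ogub HZo [:: t; t'].
  exists u => q'; rewrite inE => /orP [/eqP ->|/Ht h].
    apply: (ogT HQo Ht'); apply/iota_le; apply: Hu; rewrite !inE eqxx orbT //.
  apply: (ogT HQo h); apply/iota_le; apply: Hu; rewrite !inE eqxx //.
exists (t + one) => q /Ht h; apply: (ogle_lt_trans HQo h); apply/iota_lt.
have := ogltD HZo t one_pos; rewrite add0r addrC; done.
Qed.

Lemma near_eq q e w w' : e + e = iota one ->
  ltr_of leQ (q - e) (iota w) -> ltr_of leQ (iota w) (q + e) ->
  ltr_of leQ (q - e) (iota w') -> ltr_of leQ (iota w') (q + e) -> w = w'.
Proof.
move=> he h1 h2 h3 h4.
have E : (q + e) - (q - e) = e + e by rewrite opprB addrCA [q + e]addrC addrK.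
have k1 : ltr_of leZ (w - w') one.
  apply/iota_lt; rewrite iotaB -he -E; exact: (ogltD2 HQo h2 (ogltN HQo h3)).
have k2 : ltr_of leZ (w' - w) one.
  apply/iota_lt; rewrite iotaB -he -E; exact: (ogltD2 HQo h4 (ogltN HQo h1)).
have key x y : ltr_of leZ (y - x) one -> leZ x y -> x = y.
  move=> hk hxy; case: (@eqP _ x y) => // nxy; exfalso.
  have : ltr_of leZ 0 (y - x) by have := ogltD HZo (- x) (conj hxy nxy); rewrite subrr.
  case: HZ => _ _ Hm _ => /Hm h; apply/(ogltE HZo): hk; by apply.
case: (ogtot HZo w w') => hh; first exact: key.
by symmetry; apply: key.
Qed.

Lemma lt_subq q e : ltr_of leQ 0 e -> ltr_of leQ (q - e) q.
Proof. by move=> h; have := ogltD HQo q (ogltN HQo h); rewrite oppr0 add0r addrC. Qed.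
Lemma lt_qadd q e : ltr_of leQ 0 e -> ltr_of leQ q (q + e).
Proof. by move=> h; have := ogltD HQo q h; rewrite add0r addrC. Qed.

Lemma oglt_irr x : ~ ltr_of leQ x x. Proof. by case. Qed.

Section Char.
Variables (N : nat) (S : ('I_N -> option Z) -> Prop) (x : 'I_N -> option Q).

Lemma fin_coord e : e + e = iota one -> ltr_of leQ 0 e ->
  closure_Om leQ (embed iota S) x -> forall i q, x i = Some q -> exists w, q = iota w.
Proof.
move=> he e0 Hc i q hq.
pose a0 j := odflt 0 (x j) - e. pose b0 j := odflt 0 (x j) + e.
have C0 : forall j q, x j = Some q -> ltr_of leQ (a0 j) q /\ ltr_of leQ q (b0 j).
  by move=> j q' h; rewrite /a0 /b0 h /=; split; [apply: lt_subq | apply: lt_qadd].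
case: (Hc a0 b0) => [j|y [[s0 [Ss Hys]] Hy]].
  by case E: (x j) => [q'|] //; apply: C0.
have := Hy i; rewrite hq Hys /a0 /b0 hq /=; case: (s0 i) => [w0|] /=; last by case=> ? [].
case=> _ [[<-] [h1 h2]].
case: (eqVneq q (iota w0)) => [->|nq]; first by exists w0.
exfalso; case: (ogtot HQo q (iota w0)) => hqw.
- pose b1 j := if j == i then iota w0 else b0 j.
  case: (Hc a0 b1) => [j|y1 [[s1 [_ Hys1]] Hy1]].
    case E: (x j) => [q'|] //; rewrite /b1; case: eqP => [ej|_]; last exact: C0.
    move: E; rewrite ej hq => -[<-].
    by split; [rewrite /a0 hq; apply: lt_subq | split => //; apply/eqP].
  have := Hy1 i; rewrite hq Hys1 /a0 /b1 eqxx hq /=; case: (s1 i) => [w1|] /=; last by case=> ? [].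
  case=> _ [[<-] [k1 k2]].
  have := near_eq he k1 (oglt_trans HQo k2 h2) h1 h2 => ew; rewrite ew in k2.
  exact: oglt_irr k2.
- pose a1 j := if j == i then iota w0 else a0 j.
  case: (Hc a1 b0) => [j|y1 [[s1 [_ Hys1]] Hy1]].
    case E: (x j) => [q'|] //; rewrite /a1; case: eqP => [ej|_]; last exact: C0.
    move: E; rewrite ej hq => -[<-].
    split; [split => //; apply/eqP; rewrite eq_sym | rewrite /b0 hq; apply: lt_qadd] => //.
  have := Hy1 i; rewrite hq Hys1 /a1 /b0 eqxx hq /=; case: (s1 i) => [w1|] /=; last by case=> ? [].
  case=> _ [[<-] [k1 k2]].
  have := near_eq he (oglt_trans HQo h1 k1) k2 h1 h2 => ew; rewrite ew in k1.
  exact: oglt_irr k1.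
Qed.

Lemma clos_char : closure_Om leQ (embed iota S) x <->
  exists z, (forall i, x i = omap iota (z i)) /\ zclos leZ S z.
Proof.
split; last first.
  move=> [z [Hx Hz]] a b Hab.
  have [t Ht] := cofinal_seq [seq a i | i <- enum 'I_N].
  have [s [Ss Hs]] := Hz t.
  exists (fun i => omap iota (s i)); split; first by exists s.
  move=> i; have := Hab i; have := Hs i; rewrite Hx; case: (z i) => [v|] /=.
    by move=> -> [h1 h2]; exists (iota v).
  case: (s i) => [w|] //= hw _.
  apply: (oglt_le_trans HQo (Ht (a i) _)); first by apply: map_f; rewrite mem_enum.
  exact/iota_le.
move=> Hc; have [e [he e0]] := eps.
pose a0 j := odflt 0 (x j) - e. pose b0 j := odflt 0 (x j) + e.
have C0 : forall j q, x j = Some q -> ltr_of leQ (a0 j) q /\ ltr_of leQ q (b0 j).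
  by move=> j q' h; rewrite /a0 /b0 h /=; split; [apply: lt_subq | apply: lt_qadd].
case: (Hc a0 b0) => [j|y [[s [Ss Hys]] Hy]].
  by case E: (x j) => [q'|] //; apply: C0.
have Cl1 : forall i q, x i = Some q -> exists w, s i = Some w /\ q = iota w.
  move=> i q hq; have [w hw] := fin_coord he e0 Hc hq.
  have := Hy i; rewrite hq Hys /a0 /b0 hq /=; case: (s i) => [w0|] /=; last by case=> ? [].
  case=> _ [[<-] [h1 h2]]; exists w; split => //; congr Some.
  rewrite hw in h1 h2; apply: (near_eq he h1 h2); [apply: lt_subq | apply: lt_qadd] => //.
exists (fun i => if x i is Some _ then s i else None); split.
  move=> i; case E: (x i) => [q|] //; have [w [-> ->]] := Cl1 i q E; done.
move=> t.
pose a2 j := if x j is Some q then q - e else iota t.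
case: (Hc a2 b0) => [j|y2 [[s2 [Ss2 Hys2]] Hy2]].
  case E: (x j) => [q'|] //; rewrite /a2 E; split; first exact: lt_subq.
  by have := C0 j q' E => -[].
exists s2; split => // i; have := Hy2 i; rewrite Hys2 /a2 /b0.
case E: (x i) => [q|] /=.
  have [w [-> hw]] := Cl1 i q E; case: (s2 i) => [w2|] /=; last by case=> ? [].
  case=> _ [[<-] [h1 h2]]; congr Some; rewrite hw in h1 h2.
  apply: (near_eq he h1 h2); [apply: lt_subq | apply: lt_qadd] => //.
case: (s2 i) => [w2|] //= h; apply/iota_le; exact: oglt_le.
Qed.

End Char.

End Clos.

Lemma widen_lift m (j : 'I_m) : widen_ord (leqnSn m) j = lift ord_max j.
Proof. by apply: val_inj => /=; rewrite /bump leqNgt ltn_ord. Qed.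

Lemma idx_cases m (i : 'I_m.+1) : i = ord_max \/ exists j, i = widen_ord (leqnSn m) j.
Proof. by case: (unliftP ord_max i) => [j ->|->]; [right; exists j; rewrite widen_lift | left]. Qed.

Lemma widen_neq m (j : 'I_m) : (widen_ord (leqnSn m) j == ord_max) = false.
Proof. by apply/negbTE; rewrite widen_lift eq_sym; apply: neq_lift. Qed.

Lemma unlift_widen m (j : 'I_m) : unlift ord_max (widen_ord (leqnSn m) j) = Some j.
Proof. by rewrite widen_lift liftK. Qed.

Lemma supp_omap (Z Q : Type) (f : Z -> Q) N (x : 'I_N -> option Q) (z : 'I_N -> option Z) :
  (forall i, x i = omap f (z i)) -> supp x = supp z.
Proof. by move=> H; apply/setP => i; rewrite !inE H; case: (z i). Qed.

Section Main.
Variables (Z Q : zmodType) (leZ : rel Z) (one : Z) (HZ : is_Zgroup leZ one)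
  (leQ : rel Q) (iota : Z -> Q) (HQ : is_divisible_hull leZ leQ iota).

Lemma Fface_char N (J : {set 'I_N}) (S : ('I_N -> option Z) -> Prop) x :
  Fface leQ iota J S x <-> exists z, (forall i, x i = omap iota (z i)) /\ zclos leZ S z /\ supp z = J.
Proof.
rewrite /Fface /clos; split.
  move=> [/(clos_char HZ HQ) [z [Hx Hz]] Hs]; exists z; split => //; split => //.
  by rewrite -(supp_omap Hx).
move=> [z [Hx [Hz Hs]]]; split; first by apply/(clos_char HZ HQ); exists z.
by rewrite (supp_omap Hx).
Qed.

Variables (m : nat) (I : {set 'I_m.+1}) (A : ('I_m.+1 -> option Z) -> Prop)
  (k : nat) (phi : 'I_k -> 'I_m.+1 -> int) (gam : 'I_k -> Z)
  (l : nat) (psi : 'I_l -> 'I_m.+1 -> int) (rho nn : 'I_l -> nat)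
  (Hn : forall j, (0 < nn j)%N /\ (rho j < nn j)%N)
  (HAx : forall x, A x <-> [/\ supp x = I, (forall j, leZ (gam j) (linform I (phi j) x)) &
          (forall j, congr_mod (linform I (psi j) x) (one *+ rho j) (nn j))]).

Lemma part1a J x : Fface leQ iota J A x -> Fface leQ iota (hatJ J) (hat A) (socle x).
Proof.
move=> /Fface_char [z [Hx [Hz Hs]]]; apply/Fface_char; exists (socle z); split.
  by move=> i; rewrite /socle Hx.
split.
  move=> t; have [s [Ss Hss]] := Hz t; exists (socle s); split.
    by exists s; split.
  by move=> i; apply: Hss.
by apply/setP => i; rewrite !inE -Hs inE.
Qed.

Lemma dir2 (Fx F : {set 'I_m.+1}) c :
  (forall i, i \in F -> i \notin Fx) ->
  (forall t, exists a, A a /\ (forall i, i \in Fx -> a i = Some (c i)) /\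
                       (forall i, i \in F -> exists v, a i = Some v /\ leZ t v)) ->
  exists d, good I phi psi nn d /\ (forall i, i \in Fx -> d i = 0) /\ (forall i, i \in F -> 1 <= d i).
Proof.
move=> Hdisj Hyp.
have HA' : forall a, A a -> supp a = I /\ forall j, leZ (gam j) (linform I (phi j) a).
  by move=> a /HAx [].
have [D [h0 [h1 h2]]] := dir (Hle HZ) (Hone HZ) HA' Hdisj Hyp.
exists (fun i => D i * \prod_(j < l) (nn j)%:Z); split; first exact: goodN.
split; first by move=> i hi; rewrite h0 // mul0r.
by move=> i hi; apply: (goodN_pos Hn); apply: h1.
Qed.

Lemma A_supp a : A a -> supp a = I. Proof. by case/HAx. Qed.

Lemma part1b J x0 y : Fface leQ iota J A x0 -> Fface leQ iota (hatJ J) (hat A) y ->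
  exists x, Fface leQ iota J A x /\ forall i, y i = socle x i.
Proof.
move=> /Fface_char [z0 [Hx0 [Hz0 Hs0]]] /Fface_char [zy [Hy [Hzy Hsy]]].
have JI : J \subset I.
  apply/subsetP => i hi; have [s [Ss Hss]] := Hz0 0; rewrite -(A_supp Ss) inE.
  have := Hss i; have [v hv] := supp_inP Hs0 hi; by rewrite hv => ->.
have [d [Gd [Hd0 Hd1]]] : exists d, good I phi psi nn d /\ (forall i, i \in J -> d i = 0) /\
    (forall i, i \in I :\: J -> 1 <= d i).
  apply: (dir2 (c := fun i => odflt 0 (z0 i))); first by move=> i; rewrite inE => /andP [].
  move=> t; have [s [Ss Hss]] := Hz0 t; exists s; split => //; split.
    by move=> i hi; have := Hss i; have [v hv] := supp_inP Hs0 hi; rewrite hv.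
  move=> i; rewrite inE => /andP [hJ hI]; have := Hss i; rewrite (supp_outP Hs0 hJ).
  have [v hv] := supp_inP (A_supp Ss) hI; rewrite hv => h; by exists v.
have [s [Ss Hss]] := Hzy 0; case: Ss => a [Aa Hsa].
have Hl := zlift HZ HAx Aa Gd JI Hd0 (fun i hI hJ => Hd1 i (ltac:(by rewrite inE hJ hI))).
exists (fun i => omap iota (if i \in J then a i else None)); split.
  apply/Fface_char; eexists; split; first by move=> i; reflexivity.
  split => //; apply/setP => i; rewrite !inE; case: ifP => // hi.
  by have [v ->] := supp_inP (A_supp Aa) (subsetP JI i hi).
move=> i; rewrite Hy /socle.
have hiJ : (widen_ord (leqnSn m) i \in J) = (i \in hatJ J) by rewrite inE.
rewrite hiJ -Hsy inE; have := Hss i; rewrite Hsa /socle; by case: (zy i) => [v ->|].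
Qed.

Lemma part1 J : (exists x, Fface leQ iota J A x) ->
  set_eq (hat (Fface leQ iota J A)) (Fface leQ iota (hatJ J) (hat A)) /\
  (exists y, Fface leQ iota (hatJ J) (hat A) y).
Proof.
move=> [x0 hx0]; split; last by exists (socle x0); apply: part1a.
move=> y; split.
  move=> [x [hx hy]]; have -> : y = socle x by apply: functional_extensionality.
  exact: part1a.
by move=> hy; have [x [hx he]] := part1b hx0 hy; exists x.
Qed.

Lemma part2 (Hnn : nonneg leZ A) K y0 : Fface leQ iota K (hat A) y0 ->
  exists J : {set 'I_m.+1},
       [/\ (exists x, Fface leQ iota J A x),
           set_eq (hat (Fface leQ iota J A)) (Fface leQ iota K (hat A)),
           (ord_max \notin J ->
              set_eq (Fface leQ iota J A)
                (fun x => Fface leQ iota K (hat A) (socle x) /\ x ord_max = None)) &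
           (ord_max \in J ->
              set_eq (Fface leQ iota J A)
                (fun x => [/\ Fface leQ iota K (hat A) (socle x),
                              (exists z, x ord_max = Some (iota z)) &
                              clos leQ iota A x]))].
Proof.
move=> /Fface_char [zy [Hy [Hzy Hsy]]].
pose K' : {set 'I_m.+1} := [set i | if unlift ord_max i is Some j then j \in K else false].
have K'w j : (widen_ord (leqnSn m) j \in K') = (j \in K) by rewrite inE unlift_widen.
have K'max : ord_max \notin K' by rewrite inE unlift_none.
pose F := (I :\: K') :\ ord_max.
have [d [Gd [Hd0 Hd1]]] : exists d, good I phi psi nn d /\ (forall i, i \in K' -> d i = 0) /\
    (forall i, i \in F -> 1 <= d i).
  apply: (dir2 (c := fun i => if unlift ord_max i is Some j then odflt 0 (zy j) else 0)).
    by move=> i; rewrite in_setD1 in_setD => /andP [_ /andP []].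
  move=> t; have [s [[a [Aa Hsa]] Hss]] := Hzy t; exists a; split => //; split.
    move=> i; case: (idx_cases i) => [->|[j ->]]; first by rewrite (negbTE K'max).
    rewrite K'w unlift_widen => hj; have := Hss j; rewrite Hsa /socle.
    by have [v ->] := supp_inP Hsy hj.
  move=> i; rewrite in_setD1 in_setD => /andP [hm /andP [hK hI]].
  case: (idx_cases i) hm hK hI => [->|[j ->]]; first by rewrite eqxx.
  move=> _; rewrite K'w => hj hI; have := Hss j; rewrite Hsa /socle (supp_outP Hsy hj).
  have [v hv] := supp_inP (A_supp Aa) hI; rewrite hv => h; by exists v.
have [s0 [[a0 [Aa0 Hsa0]] Hss0]] := Hzy 0.
have HsI := A_supp Aa0.
have K'I : K' \subset I.
  apply/subsetP => i; case: (idx_cases i) => [->|[j ->]]; first by rewrite (negbTE K'max).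
  rewrite K'w => hj; have := Hss0 j; rewrite Hsa0 /socle; have [v ->] := supp_inP Hsy hj => h.
  by rewrite -HsI inE h.
have dmax : ord_max \in I -> 0 <= d ord_max := fun h => nonneg_dir HZ HAx Hnn Aa0 Gd h.
pose b := (ord_max \in I) && (d ord_max == 0).
pose J := if b then ord_max |: K' else K'.
have JI : J \subset I.
  rewrite /J; case: ifP => hb; last done.
  by rewrite subUset sub1set K'I; case/andP: hb => ->.
have HJ0 : forall i, i \in J -> d i = 0.
  move=> i; rewrite /J; case: ifP => hb; last exact: Hd0.
  rewrite in_setU1 => /orP [/eqP ->|/Hd0 //]; by case/andP: hb => _ /eqP.
have HJ1 : forall i, i \in I -> i \notin J -> 1 <= d i.
  move=> i hI hJ; case: (idx_cases i) hI hJ => [->|[j ->]] hI hJ.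
    have : ~~ b by move: hJ; rewrite /J; case: ifP => // _; rewrite in_setU1 eqxx.
    rewrite /b hI /= => hne; rewrite -gtz0_ge1 lt_def hne; exact: dmax.
  apply: Hd1; rewrite in_setD1 in_setD widen_neq hI andbT /=.
  by move: hJ; rewrite /J; case: ifP => _ //; rewrite in_setU1 widen_neq.
have Hl := zlift HZ HAx Aa0 Gd JI HJ0 HJ1.
have FJ : Fface leQ iota J A (fun i => omap iota (if i \in J then a0 i else None)).
  apply/Fface_char; eexists; split; first by move=> i; reflexivity.
  split => //; apply/setP => i; rewrite !inE; case: ifP => // hi.
  by have [v ->] := supp_inP HsI (subsetP JI i hi).
have hJK : hatJ J = K.
  by apply/setP => j; rewrite inE /J; case: ifP => _; rewrite ?in_setU1 ?widen_neq /= K'w.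
have [P1 _] := part1 (ex_intro _ _ FJ).
rewrite hJK in P1.
exists J; split.
- by eexists; exact: FJ.
- exact: P1.
- move=> hmJ x; split.
    move=> hx; split; first by rewrite -hJK; apply: part1a.
    case: hx => _ hs; move: hmJ; rewrite -hs inE; by case: (x ord_max).
  move=> [hx hxm]; have [x' [hx' he]] := part1b FJ (ltac:(by rewrite hJK; apply: hx)).
  suff -> : x = x' by [].
  apply: functional_extensionality => i; case: (idx_cases i) => [->|[j ->]]; last exact: he.
  rewrite hxm; case: hx' => _ hs'; move: hmJ; rewrite -hs' inE; by case: (x' ord_max).
- move=> hmJ x; split.
    move=> hx; split.
    + by rewrite -hJK; apply: part1a.
    + move/Fface_char: hx => [z [Hxz [_ Hs]]]; rewrite Hxz.
      by have [v ->] := supp_inP Hs hmJ; exists v.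
    + by case: hx.
  move=> [hx [z hz] hc]; split => //.
  apply/setP => i; rewrite inE; case: (idx_cases i) => [->|[j ->]]; first by rewrite hz hmJ.
  case: hx => _ hs; rewrite -hJK in hs; move/setP: hs => /(_ j); rewrite !inE /socle; done.
Qed.

End Main.

Unset Implicit Arguments.

Theorem proposition3p7
  (Z : zmodType) (leZ : rel Z) (one : Z) (HZ : is_Zgroup leZ one)
  (Q : zmodType) (leQ : rel Q) (iota : Z -> Q)
  (HQ : is_divisible_hull leZ leQ iota)
  (m : nat) (I : {set 'I_m.+1}) (A : ('I_m.+1 -> option Z) -> Prop)
  (HA : basic_presburger leZ one I A) :
  let X := hat A in
  (forall J : {set 'I_m.+1},
     (exists x, Fface leQ iota J A x) ->
     set_eq (hat (Fface leQ iota J A)) (Fface leQ iota (hatJ J) X) /\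
     (exists y, Fface leQ iota (hatJ J) X y)) /\
  (nonneg leZ A ->
   forall K : {set 'I_m},
     (exists y, Fface leQ iota K X y) ->
     exists J : {set 'I_m.+1},
       [/\ (exists x, Fface leQ iota J A x),
           set_eq (hat (Fface leQ iota J A)) (Fface leQ iota K X),
           (ord_max \notin J ->
              set_eq (Fface leQ iota J A)
                (fun x => Fface leQ iota K X (socle x) /\ x ord_max = None)) &
           (ord_max \in J ->
              set_eq (Fface leQ iota J A)
                (fun x => [/\ Fface leQ iota K X (socle x),
                              (exists z, x ord_max = Some (iota z)) &
                              clos leQ iota A x]))]).
Proof.
move: HA => [k [phi [gam [l [psi [rho [nn [Hn HAx]]]]]]]].
move=> X; rewrite /X; split.
  move=> J hJ; exact: (part1 HZ HQ Hn HAx hJ).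
move=> Hnn K [y0 hy0]; exact: (part2 HZ HQ Hn HAx Hnn hy0).
Qed.
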